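(* Every finite nonempty set $A\subseteq S'(n,l)$ has a minimal set of generators; that is, there is a set of generators $G_0$ of $A$ such that $G_0\subseteq G$ for every set of generators $G$ of $A$ (equivalently, the intersection of all sets of generators of $A$ is itself a set of generators of $A$).
   Context: $\mathbb N_n=\{1,\dots,n\}$. $F_n$ denotes the set of functions $f:\mathbb N_n\to[0,1]$ with $\sum_{i=1}^n f(i)=1$. A generalized string of length $l$ over $\mathbb N_n$ is a function $s:\mathbb N_l\to F_n$; the set of these is $S'(n,l)$, and the value of $s$ at $i$ is written $s[i]$. The generalized Hamming distance is $d_{GH}(s,t)=\sum_{i=1}^l\big(1-\sum_{j=1}^n\min\{s[i](j),t[i](j)\}\big)$. For a finite nonempty $\sigma\subseteq S'(n,l)$, its radius is $r(\sigma)=\min\{r\ge0:\exists x\in S'(n,l)\,\forall y\in\sigma\ d_{GH}(x,y)\le r\}$ (this minimum exists), and a center of $\sigma$ is any $c\in S'(n,l)$ with $d_{GH}(c,y)\le r(\sigma)$ for all $y\in\sigma$. For $x\in S'(n,l)$, $r\ge0$: $B(x,r)=\{y:d_{GH}(x,y)\le r\}$, ${\rm int}B(x,r)=\{y:d_{GH}(x,y)<r\}$, ${\rm bd}B(x,r)=\{y:d_{GH}(x,y)=r\}$. $MB(\sigma)=\{B(c,r(\sigma)):c\text{ is a center of }\sigma\}$. For a finite nonempty $A\subseteq S'(n,l)$, a set $G\subseteq A$ is a set of generators of $A$ if there is $B\in MB(A)$ with $G\subseteq{\rm bd}B$ and $A\setminus G\subseteq{\rm int}B$. *)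

(* Defs.v *)
From HB Require Import structures.
From mathcomp Require Import all_boot all_order all_algebra.
From mathcomp Require Import boolp classical_sets cardinality reals.
Set Implicit Arguments. Unset Strict Implicit. Unset Printing Implicit Defensive.
Import Order.TTheory GRing.Theory Num.Theory.
Local Open Scope ring_scope.
Local Open Scope classical_set_scope.

Section GenStrings.
Variable R : realType.

(* A raw generalized string of length l over N_n: s i j = s[i+1](j+1). *)
Definition gstr (n l : nat) := {ffun 'I_l -> {ffun 'I_n -> R}}.

Definition in_F (n : nat) (f : {ffun 'I_n -> R}) : Prop :=
  (forall j, 0 <= f j <= 1) /\ \sum_(j < n) f j = 1.

Definition in_S (n l : nat) (s : gstr n l) : Prop := forall i, in_F (s i).

Definition dGH (n l : nat) (s t : gstr n l) : R :=
  \sum_(i < l) (1 - \sum_(j < n) Num.min (s i j) (t i j)).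

Definition covers (n l : nat) (sigma : set (gstr n l)) (x : gstr n l) (r : R) :=
  in_S x /\ forall y, sigma y -> dGH x y <= r.

Definition is_radius (n l : nat) (sigma : set (gstr n l)) (r : R) : Prop :=
  0 <= r /\ (exists x, covers sigma x r) /\
  (forall r', 0 <= r' -> (exists x, covers sigma x r') -> r <= r').

(* G is a set of generators of A: there is a ball B(c, r(A)) in MB(A)
   (c a center of A) with G in its boundary and A \ G in its interior. *)
Definition generators (n l : nat) (A G : set (gstr n l)) : Prop :=
  G `<=` A /\
  exists r c, is_radius A r /\ covers A c r /\
    (forall y, G y -> dGH c y = r) /\
    (forall y, (A `\` G) y -> dGH c y < r).

End GenStrings.

(* Main.v *)
Require Import Defs.
From mathcomp Require Import all_boot all_order all_algebra.
From mathcomp Require Import boolp classical_sets cardinality reals.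
From mathcomp Require Import finmap.
From mathcomp Require Import all_classical all_reals all_analysis.
Import Order.TTheory GRing.Theory Num.Theory.
From mathcomp Require Import lra.
Import ArrowAsProduct.
Import numFieldNormedType.Exports.
Local Open Scope ring_scope.
Local Open Scope classical_set_scope.

Section Top.
Variable R : realType.

Lemma cont_sum (T : topologicalType) (X : Type) (r : seq X) (F : X -> T -> R) :
  (forall a, continuous (F a)) -> continuous (fun t => \sum_(a <- r) F a t).
Proof.
move=> Fc; elim: r => [|a r IH] t.
  under eq_fun do rewrite big_nil. exact: cvg_cst.
under eq_fun do rewrite big_cons.
apply: cvgD; [exact: Fc | exact: IH].
Qed.

Lemma cont_max (T : topologicalType) (X : Type) (r : seq X) (F : X -> T -> R) :
  (forall a, continuous (F a)) -> continuous (fun t => \big[Num.max/0]_(a <- r) F a t).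
Proof.
move=> Fc; elim: r => [|a r IH] t.
  under eq_fun do rewrite big_nil. exact: cvg_cst.
under eq_fun do rewrite big_cons.
apply: (@continuous_max R T (F a) (fun t => \big[Num.max/0]_(a <- r) F a t)); [exact: Fc | exact: IH].
Qed.


Lemma cont_sub1 (T : topologicalType) (g : T -> R) :
  continuous g -> continuous (fun t => 1 - g t).
Proof. move=> gc t; apply: cvgB; [exact: cvg_cst | exact: gc]. Qed.

Lemma cont_minc (T : topologicalType) (g : T -> R) (c : R) :
  continuous g -> continuous (fun t => Num.min (g t) c).
Proof. move=> gc t; apply: (@continuous_min R T g (fun _ => c)); [exact: gc | exact: cvg_cst]. Qed.

Section Rad.
Variables (n l : nat).
Local Notation I := ('I_l * 'I_n)%type.
Local Notation P := (I -> R).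

Definition phi (f : P) : gstr R n l := [ffun i => [ffun j => f (i, j)]].
Definition psi (x : gstr R n l) : P := fun p => x p.1 p.2.
Lemma phi_psi x : phi (psi x) = x.
Proof. by apply/ffunP => i; apply/ffunP => j; rewrite !ffunE. Qed.

Definition K : set P := [set f | (forall p, 0 <= f p <= 1) /\ (forall i, \sum_(j < n) f (i, j) = 1)].

Lemma K_inS f : K f <-> in_S (phi f).
Proof.
split.
  move=> [H1 H2] i; split => [j|].
    by rewrite !ffunE; apply: H1.
  by rewrite ffunE; under eq_bigr do rewrite ffunE; apply: H2.
move=> H; split.
  by move=> [i j]; have [/(_ j) + _] := H i; rewrite !ffunE.
by move=> i; have [_] := H i; under eq_bigr do rewrite !ffunE.
Qed.

Lemma projc (p : I) : continuous (fun f : P => f p).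
Proof. exact: (@proj_continuous _ (fun _ => R) p). Qed.

Lemma K_closed : closed K.
Proof.
have -> : K = (\bigcap_(p in setT) ((fun f : P => f p) @^-1` ([set x : R | 0 <= x] `&` [set x | x <= 1])))
   `&` (\bigcap_(i in setT) ((fun f : P => \sum_(j < n) f (i, j)) @^-1` [set x : R | x = 1])).
  apply/seteqP; split => f /=.
    by move=> [H1 H2]; split => p _ /=; [have /andP[] := H1 p| apply: H2].
  move=> [H1 H2]; split => [p|i]; last exact: H2.
  by have [/= -> ->] := H1 p Logic.I.
apply: closedI; apply: closed_bigI => p _; apply: preimage_closed.
- by move=> x _; apply: projc.
- by apply: closedI; [apply: closed_ge | apply: closed_le].
- move=> x _; apply: cont_sum => j; exact: projc.
- exact: closed_eq.
Qed.

Lemma K_compact : compact K.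
Proof.
apply: (subclosed_compact K_closed (@tychonoff I (fun _ => R) (fun _ => `[0, 1]%classic) (fun _ => @segment_compact _ 0 1))).
move=> f [H1 _] p /=; rewrite in_itv /=; exact: H1.
Qed.

Lemma dGH_cont (y : gstr R n l) : continuous (fun f : P => dGH (phi f) y).
Proof.
have -> : (fun f : P => dGH (phi f) y) =
  (fun f => \sum_(i < l) (1 - \sum_(j < n) Num.min (f (i, j)) (y i j))).
  apply: funext => f; rewrite /dGH; apply: eq_bigr => i _.
  by congr (_ - _); apply: eq_bigr => j _; rewrite !ffunE.
apply: cont_sum => i; apply: (@cont_sub1 P).
apply: cont_sum => j; apply: (@cont_minc P (fun f => f (i, j))).
exact: projc.
Qed.


Lemma bigmax_ge (X : eqType) (s : seq X) (F : X -> R) x :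
  x \in s -> F x <= \big[Num.max/0]_(a <- s) F a.
Proof.
elim: s => [|a s IH] //; rewrite inE big_cons => /orP[/eqP->|xs]; rewrite le_max ?lexx //.
by rewrite IH ?orbT.
Qed.

Lemma bigmax_le (X : eqType) (s : seq X) (F : X -> R) c :
  0 <= c -> (forall x, x \in s -> F x <= c) -> \big[Num.max/0]_(a <- s) F a <= c.
Proof.
move=> c0; elim: s => [|a s IH] H; rewrite ?big_nil ?big_cons // ge_max H ?inE ?eqxx //.
by apply: IH => x xs; apply: H; rewrite inE xs orbT.
Qed.

Lemma bigmax_ge0 (X : eqType) (s : seq X) (F : X -> R) :
  0 <= \big[Num.max/0]_(a <- s) F a.
Proof. elim: s => [|a s IH]; rewrite ?big_nil ?big_cons ?lexx // le_max IH orbT //. Qed.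

Lemma radius_ex (A : set (gstr R n l)) : finite_set A -> A !=set0 ->
  (forall y, A y -> in_S y) -> exists r c, is_radius A r /\ covers A c r.
Proof.
move=> /finite_fsetP[B ->] [y0 y0B] HS.
pose Fm := fun f : P => \big[Num.max/0]_(y <- B) dGH (phi f) y.
have Fmc : continuous Fm by apply: cont_max => y; exact: dGH_cont.
have K0 : K !=set0 by exists (psi y0); apply/K_inS; rewrite phi_psi; exact: HS.
have [c cK cmin] := compact_EVT_min K0 K_compact (continuous_subspaceT Fmc).
have cK' : K c by move/set_mem: cK.
exists (Fm c), (phi c).
have cov : covers [set` B] (phi c) (Fm c).
  split; first by apply/K_inS.
  by move=> y yB; apply: (@bigmax_ge _ B (fun y => dGH (phi c) y)).
split=> //; split; first exact: bigmax_ge0.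
split; first by exists (phi c).
move=> r' r'0 [x [xS xc]].
apply: le_trans (cmin (psi x) _) _; first by apply/mem_set/K_inS; rewrite phi_psi.
rewrite /Fm phi_psi; apply: bigmax_le => // y yB; exact: xc.
Qed.

End Rad.
End Top.

Set Implicit Arguments. Unset Strict Implicit.
Section Main.
Variables (R : realType) (n l : nat) (A : set (gstr R n l)).

Lemma radius_uniq r1 r2 : is_radius A r1 -> is_radius A r2 -> r1 = r2.
Proof.
move=> [r10 [e1 m1]] [r20 [e2 m2]]; apply/le_anti/andP; split; [exact: m1 | exact: m2].
Qed.

Definition Gc (r : R) (c : gstr R n l) : set (gstr R n l) := [set y | A y /\ dGH c y = r].

Lemma Gc_gen r c : is_radius A r -> covers A c r -> generators A (Gc r c).
Proof.
move=> rad cov; split; first by move=> y [].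
exists r, c; split=> //; split=> //; split; first by move=> y [].
move=> y [Ay nG]; have := cov.2 y Ay; rewrite le_eqVlt => /orP[/eqP e|//].
by exfalso; apply: nG.
Qed.

Lemma gen_Gc r G : is_radius A r -> generators A G -> exists c, covers A c r /\ G = Gc r c.
Proof.
move=> rad [GA [r' [c [rad' [cov [H1 H2]]]]]].
have e := radius_uniq rad' rad; subst r.
exists c; split=> //; apply/seteqP; split => y.
  by move=> Gy; split; [exact: GA | exact: H1].
move=> [Ay e]; have [//|nG] := pselect (G y).
by have := H2 y (conj Ay nG); rewrite e ltxx.
Qed.

Definition mid (c1 c2 : gstr R n l) : gstr R n l :=
  [ffun i => [ffun j => (c1 i j + c2 i j) / 2]].

Lemma mid_inS c1 c2 : in_S c1 -> in_S c2 -> in_S (mid c1 c2).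
Proof.
move=> H1 H2 i; have [a1 s1] := H1 i; have [a2 s2] := H2 i; split.
  move=> j; rewrite !ffunE; have /andP[? ?] := a1 j; have /andP[? ?] := a2 j.
  by apply/andP; split; lra.
rewrite ffunE; under eq_bigr do rewrite ffunE.
rewrite -mulr_suml big_split /= s1 s2; lra.
Qed.

Lemma min_mid (a b t : R) : Num.min a t + Num.min b t <= 2 * Num.min ((a + b) / 2) t.
Proof.
have h1 : Num.min a t <= a by rewrite ge_min lexx.
have h2 : Num.min a t <= t by rewrite ge_min lexx orbT.
have h3 : Num.min b t <= b by rewrite ge_min lexx.
have h4 : Num.min b t <= t by rewrite ge_min lexx orbT.
have : (Num.min a t + Num.min b t) / 2 <= Num.min ((a + b) / 2) t.
  by rewrite le_min; apply/andP; split; lra.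
lra.
Qed.

Lemma dGH_mid c1 c2 y : 2 * dGH (mid c1 c2) y <= dGH c1 y + dGH c2 y.
Proof.
rewrite /dGH mulr_sumr -big_split /=; apply: ler_sum => i _.
have : \sum_(j < n) Num.min (c1 i j) (y i j) + \sum_(j < n) Num.min (c2 i j) (y i j)
   <= 2 * \sum_(j < n) Num.min (mid c1 c2 i j) (y i j).
  rewrite -big_split mulr_sumr /=; apply: ler_sum => j _; rewrite !ffunE; exact: min_mid.
lra.
Qed.

Lemma mid_center r c1 c2 : covers A c1 r -> covers A c2 r ->
  covers A (mid c1 c2) r /\ Gc r (mid c1 c2) `<=` Gc r c1 `&` Gc r c2.
Proof.
move=> [S1 C1] [S2 C2]; split.
  split; first exact: mid_inS.
  move=> y Ay; have := dGH_mid c1 c2 y; have := C1 y Ay; have := C2 y Ay; lra.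
move=> y [Ay e]; have := dGH_mid c1 c2 y; have := C1 y Ay; have := C2 y Ay.
rewrite e => h2 h1 h.
by split; split => //; lra.
Qed.

End Main.

Local Close Scope ring_scope.

Theorem mainTheorem3 (R : realType) (n l : nat) (A : set (gstr R n l)) :
  finite_set A -> A !=set0 -> (forall y, A y -> in_S y) ->
  exists G0, generators A G0 /\ forall G, generators A G -> G0 `<=` G.
Proof.
move=> Afin A0 HS.
have [r0 [c0 [rad cov]]] := @radius_ex R n l A Afin A0 HS.
have /finite_fsetP[B AB] := Afin.
pose mu (G : set (gstr R n l)) := #|` [fset y in B | `[< G y >]] |%fset.
pose Pk := fun k => `[< exists G, generators A G /\ mu G = k >].
have Pex : exists k, Pk k.
  exists (mu (Gc A r0 c0)); apply/asboolP; exists (Gc A r0 c0); split=> //.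
  exact: Gc_gen.
case: (ex_minnP Pex) => k /asboolP[G0 [gG0 muG0]] kmin.
exists G0; split=> // G gG.
have [c [covc eG0]] := gen_Gc rad gG0; subst G0.
have [c' [covc' ->]] := gen_Gc rad gG.
have [covm sub] := mid_center covc covc'.
have gm : generators A (Gc A r0 (mid c c')) := Gc_gen rad covm.
have kle : (k <= mu (Gc A r0 (mid c c')))%N.
  by apply: kmin; apply/asboolP; exists (Gc A r0 (mid c c')); split.
have sF : (([fset y in B | `[< Gc A r0 (mid c c') y >]])%fset `<=`
           ([fset y in B | `[< Gc A r0 c y >]])%fset)%fset.
  apply/fsubsetP => y; rewrite !inE => /andP[yB /asboolP Gy]; rewrite yB /=.
  by apply/asboolP; exact: (sub y Gy).1.
have eF : ([fset y in B | `[< Gc A r0 (mid c c') y >]])%fset ==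
          ([fset y in B | `[< Gc A r0 c y >]])%fset.
  rewrite -(fsubset_leqif_cards sF).2 eqn_leq (fsubset_leqif_cards sF).1 /=.
  by rewrite -/(mu _) muG0.
move=> y Gy; have yB : y \in B by have := Gy.1; rewrite AB.
have : y \in ([fset y in B | `[< Gc A r0 c y >]])%fset by rewrite !inE yB /=; apply/asboolP.
rewrite -(eqP eF) !inE => /andP[_ /asboolP Gmy].
exact: (sub y Gmy).2.
Qed.
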